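(* Let $\mathcal{L}$ be a family of linear algebraic laws involving a single binary operation symbol. Then $\mathcal{G}(\mathcal{L})$ does not contain the empty operator, every element of $\mathcal{G}(\mathcal{L})$ admits a seed, and every seed of an element of $\mathcal{G}(\mathcal{L})$ is a pair of injective terms.
   Context: Terms are built from an infinite set of variables with one binary operation symbol $*$; addresses are finite sequences over $\{0,1\}$ ($0$ = left, $1$ = right), $t/\alpha$ is the subterm at $\alpha$. A term is injective if no variable occurs twice in it. A law $l=r$ is linear if it is balanced (same variables on both sides) and $l$, $r$ are injective. For an oriented law $L=(l,r)$ and address $\alpha$, $O^{+}_{L,\alpha}$ is the partial map sending $t$ with $t/\alpha=l\sigma$ (for a substitution $\sigma$) to the term obtained by replacing that subterm by $r\sigma$, and $O^{-}_{L,\alpha}$ is its inverse; $\mathcal{G}(\mathcal{L})$ is the monoid of partial maps generated by these under composition. A pair of terms $(l,r)$ is a seed of a partial operator $f$ if $f$, as a set of pairs, is exactly the set of all pairs $(l\sigma,r\sigma)$ with $\sigma$ a substitution. *)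

(* Defs.v *)
From Stdlib Require Import List.
Import ListNotations.

Inductive term : Type :=
| Var : nat -> term
| Op : term -> term -> term.

(* Addresses: false = 0 = left, true = 1 = right. *)
Definition address := list bool.

Fixpoint subterm (t : term) (a : address) : option term :=
  match a, t with
  | [], _ => Some t
  | false :: a', Op t1 _ => subterm t1 a'
  | true :: a', Op _ t2 => subterm t2 a'
  | _ :: _, Var _ => None
  end.

Fixpoint replace (t : term) (a : address) (s : term) : option term :=
  match a, t with
  | [], _ => Some s
  | false :: a', Op t1 t2 =>
      match replace t1 a' s with Some t1' => Some (Op t1' t2) | None => None end
  | true :: a', Op t1 t2 =>
      match replace t2 a' s with Some t2' => Some (Op t1 t2') | None => None end
  | _ :: _, Var _ => None
  end.

Definition substitution := nat -> term.

Fixpoint subst (s : substitution) (t : term) : term :=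
  match t with
  | Var x => s x
  | Op t1 t2 => Op (subst s t1) (subst s t2)
  end.

Fixpoint vars (t : term) : list nat :=
  match t with
  | Var x => [x]
  | Op t1 t2 => vars t1 ++ vars t2
  end.

Definition injective_term (t : term) : Prop := NoDup (vars t).

Definition law := (term * term)%type.

Definition balanced (L : law) : Prop :=
  forall x, In x (vars (fst L)) <-> In x (vars (snd L)).

Definition linear_law (L : law) : Prop :=
  balanced L /\ injective_term (fst L) /\ injective_term (snd L).

(* Partial operators on terms, viewed as sets of pairs (graphs). *)
Definition operator := term -> term -> Prop.

Definition Oplus (L : law) (a : address) : operator :=
  fun t u => exists s : substitution,
    subterm t a = Some (subst s (fst L)) /\ replace t a (subst s (snd L)) = Some u.

Definition Ominus (L : law) (a : address) : operator :=
  fun t u => Oplus L a u t.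

Definition op_id : operator := fun t u => t = u.

(* composition: first f, then g *)
Definition op_comp (g f : operator) : operator :=
  fun t v => exists u, f t u /\ g u v.

Inductive in_G (Lfam : law -> Prop) : operator -> Prop :=
| G_id : in_G Lfam op_id
| G_plus : forall f L a, in_G Lfam f -> Lfam L -> in_G Lfam (op_comp (Oplus L a) f)
| G_minus : forall f L a, in_G Lfam f -> Lfam L -> in_G Lfam (op_comp (Ominus L a) f).

Definition empty_operator (f : operator) : Prop := forall t u, ~ f t u.

Definition seed (f : operator) (l r : term) : Prop :=
  forall t u, f t u <-> exists s : substitution, t = subst s l /\ u = subst s r.

(* Main.v *)
Require Import Defs.
From Stdlib Require Import List Permutation Lia Arith.
Import ListNotations.

Lemma nodup_app_iff {A} (a b : list A) :
  NoDup (a ++ b) <-> NoDup a /\ NoDup b /\ (forall z, In z a -> ~ In z b).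
Proof.
  split.
  - intro H. split; [eapply NoDup_app_remove_r; eauto|].
    split; [eapply NoDup_app_remove_l; eauto|].
    induction a as [|x a IH]; simpl; [tauto|].
    inversion H; subst. intros z [<-|Hz] Hb.
    + apply H2. apply in_or_app; auto.
    + eapply IH; eauto.
  - intros (H1&H2&H3). apply NoDup_app; auto.
Qed.

Lemma nodup4 (a b c d : list nat) : NoDup ((a++b)++(c++d)) ->
  NoDup (a++c) /\ NoDup (b++d) /\ (forall z, In z (a++c) -> ~ In z (b++d)).
Proof.
  intro H. apply nodup_app_iff.
  eapply Permutation_NoDup; [|exact H].
  rewrite <- !app_assoc. apply Permutation_app_head.
  rewrite !app_assoc. apply Permutation_app_tail.
  apply Permutation_app_comm.
Qed.

Fixpoint maxl (l : list nat) : nat :=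
  match l with [] => 0 | x :: l => Nat.max x (maxl l) end.

Lemma maxl_ge l z : In z l -> z <= maxl l.
Proof. induction l; simpl; [tauto|]. intros [->|H]; [lia|]. apply IHl in H; lia. Qed.

Lemma subst_ext s s' t : (forall x, In x (vars t) -> s x = s' x) -> subst s t = subst s' t.
Proof.
  induction t; simpl; intros H.
  - apply H; auto.
  - rewrite IHt1, IHt2; auto; intros; apply H; apply in_or_app; auto.
Qed.

Lemma subst_subst s1 s2 t : subst s1 (subst s2 t) = subst (fun x => subst s1 (s2 x)) t.
Proof. induction t; simpl; congruence. Qed.

Lemma subst_var t : subst Var t = t.
Proof. induction t; simpl; congruence. Qed.

Lemma vars_subst s t : vars (subst s t) = flat_map (fun x => vars (s x)) (vars t).
Proof. induction t; simpl. rewrite app_nil_r; auto. rewrite flat_map_app; congruence. Qed.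

Lemma perm_subst s a b : Permutation (vars a) (vars b) ->
  Permutation (vars (subst s a)) (vars (subst s b)).
Proof. intro H. rewrite !vars_subst. apply Permutation_flat_map. exact H. Qed.

Lemma var_of_subst_var s1 v x : subst s1 v = Var x -> exists y, v = Var y /\ s1 y = Var x.
Proof. destruct v; simpl; intros H; [eauto|discriminate]. Qed.

Lemma subst_fix_in s1 s2 t z : In z (vars (subst s2 t)) ->
  (forall x, In x (vars t) -> subst s1 (s2 x) = Var x) ->
  exists x, In x (vars t) /\ s1 z = Var x.
Proof.
  rewrite vars_subst, in_flat_map. intros [x [Hx Hz]] H.
  destruct (var_of_subst_var _ _ _ (H x Hx)) as [y [Ey Hy]].
  rewrite Ey in Hz. simpl in Hz. destruct Hz as [<-|[]]. eauto.
Qed.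

Lemma subst_fix_NoDup s1 s2 t : NoDup (vars t) ->
  (forall x, In x (vars t) -> subst s1 (s2 x) = Var x) ->
  NoDup (vars (subst s2 t)).
Proof.
  induction t; simpl; intros Hn H.
  - destruct (var_of_subst_var _ _ _ (H n (or_introl eq_refl))) as [y [Ey _]].
    rewrite Ey. simpl. constructor; [simpl; tauto| constructor].
  - apply nodup_app_iff in Hn as (N1&N2&D).
    apply nodup_app_iff. split; [|split].
    + apply IHt1; auto. intros; apply H; apply in_or_app; auto.
    + apply IHt2; auto. intros; apply H; apply in_or_app; auto.
    + intros z Z1 Z2.
      destruct (subst_fix_in s1 s2 t1 z Z1) as [x1 [X1 E1]].
      { intros; apply H; apply in_or_app; auto. }
      destruct (subst_fix_in s1 s2 t2 z Z2) as [x2 [X2 E2]].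
      { intros; apply H; apply in_or_app; auto. }
      rewrite E1 in E2. injection E2 as ->. eapply D; eauto.
Qed.

Lemma subst_id_inv s t : subst s t = t -> forall x, In x (vars t) -> s x = Var x.
Proof.
  induction t; simpl; intros H x Hx.
  - destruct Hx as [<-|[]]; auto.
  - injection H as H1 H2. apply in_app_or in Hx as [Hx|Hx]; auto.
Qed.

(* unification of linear terms with disjoint variables *)
Fixpoint unify (p q : term) : nat -> term :=
  match p, q with
  | Var x, _ => fun z => if Nat.eq_dec z x then q else Var z
  | Op _ _, Var y => fun z => if Nat.eq_dec z y then p else Var z
  | Op p1 p2, Op q1 q2 => fun z =>
      if in_dec Nat.eq_dec z (vars p1 ++ vars q1) then unify p1 q1 z else unify p2 q2 z
  end.

Lemma unify_mgu p q nu : subst nu p = subst nu q -> forall z, subst nu (unify p q z) = nu z.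
Proof.
  revert q; induction p as [x|p1 IH1 p2 IH2]; intros q H z.
  - simpl. destruct Nat.eq_dec; subst; simpl; auto.
  - destruct q as [y|q1 q2]; simpl.
    + destruct Nat.eq_dec; subst; simpl; auto.
    + simpl in H. injection H as H1 H2.
      destruct in_dec; auto.
Qed.

Lemma unify_agree p1 p2 q1 q2 :
  NoDup ((vars p1 ++ vars p2) ++ (vars q1 ++ vars q2)) ->
  let mu := unify (Op p1 p2) (Op q1 q2) in
  subst mu p1 = subst (unify p1 q1) p1 /\ subst mu q1 = subst (unify p1 q1) q1 /\
  subst mu p2 = subst (unify p2 q2) p2 /\ subst mu q2 = subst (unify p2 q2) q2.
Proof.
  intros H mu. apply nodup4 in H as (_&_&D).
  split; [|split; [|split]]; apply subst_ext; intros x Hx; unfold mu; simpl;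
    destruct in_dec as [i|n]; auto.
  - exfalso; apply n; apply in_or_app; auto.
  - exfalso; apply n; apply in_or_app; auto.
  - exfalso; apply (D x i); apply in_or_app; auto.
  - exfalso; apply (D x i); apply in_or_app; auto.
Qed.

Lemma unify_props p q : NoDup (vars p ++ vars q) ->
  subst (unify p q) p = subst (unify p q) q /\
  NoDup (vars (subst (unify p q) p)) /\
  (forall z, In z (vars (subst (unify p q) p)) -> In z (vars p ++ vars q)).
Proof.
  revert q; induction p as [x|p1 IH1 p2 IH2]; intros q H.
  - simpl in H. inversion H as [|? ? Hx Hq]; subst.
    assert (E: subst (unify (Var x) q) q = q).
    { transitivity (subst Var q); [|apply subst_var]. apply subst_ext. intros z Hz. simpl.
      destruct Nat.eq_dec; subst; tauto. }
    assert (E0: unify (Var x) q x = q) by (simpl; destruct Nat.eq_dec; congruence).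
    change (subst (unify (Var x) q) (Var x)) with (unify (Var x) q x). rewrite E0, E.
    split; auto. split; auto. intros; right; auto.
  - destruct q as [y|q1 q2].
    + assert (E: subst (unify (Op p1 p2) (Var y)) (Op p1 p2) = Op p1 p2).
      { transitivity (subst Var (Op p1 p2)); [|apply subst_var]. apply subst_ext. intros z Hz. simpl.
        destruct Nat.eq_dec as [e|]; auto. exfalso. rewrite e in Hz.
        apply nodup_app_iff in H as (_&_&D). apply (D y Hz). simpl; auto. }
      assert (E0: unify (Op p1 p2) (Var y) y = Op p1 p2) by (simpl; destruct Nat.eq_dec; congruence).
      change (subst (unify (Op p1 p2) (Var y)) (Var y)) with (unify (Op p1 p2) (Var y) y).
      rewrite E0, E.
      split; auto. split. eapply NoDup_app_remove_r; eauto. intros; apply in_or_app; auto.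
    + pose proof (unify_agree p1 p2 q1 q2 H) as (A1&A2&A3&A4).
      pose proof H as H'. apply nodup4 in H' as (N1&N2&D).
      destruct (IH1 q1 N1) as (U1&V1&W1). destruct (IH2 q2 N2) as (U2&V2&W2).
      change (subst (unify (Op p1 p2) (Op q1 q2)) (Op p1 p2)) with
        (Op (subst (unify (Op p1 p2) (Op q1 q2)) p1) (subst (unify (Op p1 p2) (Op q1 q2)) p2)).
      change (subst (unify (Op p1 p2) (Op q1 q2)) (Op q1 q2)) with
        (Op (subst (unify (Op p1 p2) (Op q1 q2)) q1) (subst (unify (Op p1 p2) (Op q1 q2)) q2)).
      rewrite A1, A2, A3, A4. split; [congruence|]. simpl. split.
      * apply nodup_app_iff. split; auto. split; auto.
        intros z Z1 Z2. apply (D z); auto.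
      * intros z Z. apply in_app_or in Z as [Z|Z].
        -- apply W1, in_app_or in Z. simpl. destruct Z; rewrite !in_app_iff; tauto.
        -- apply W2, in_app_or in Z. simpl. destruct Z; rewrite !in_app_iff; tauto.
Qed.

Definition good (f : operator) : Prop :=
  exists l r, seed f l r /\ NoDup (vars l) /\ Permutation (vars l) (vars r).

Lemma seed_rename f l r N : seed f l r ->
  seed f (subst (fun x => Var (x + N)) l) (subst (fun x => Var (x + N)) r).
Proof.
  intros H t u. rewrite (H t u). split; intros [s [-> ->]].
  - exists (fun y => s (y - N)). rewrite !subst_subst.
    split; apply subst_ext; intros; simpl; rewrite Nat.add_sub; auto.
  - exists (fun x => s (x + N)). rewrite !subst_subst. split; apply subst_ext; reflexivity.
Qed.

Lemma seed_comp f g l1 r1 l2 r2 : seed f l1 r1 -> NoDup (vars l1) ->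
  Permutation (vars l1) (vars r1) -> seed g l2 r2 -> NoDup (vars l2) ->
  Permutation (vars l2) (vars r2) -> good (op_comp g f).
Proof.
  intros Hf Hl1 Hp1 Hg Hl2 Hp2.
  set (N := S (maxl (vars l1 ++ vars r1))).
  set (rho := fun x => Var (x + N)).
  pose proof (seed_rename g l2 r2 N Hg) as Hg'.
  set (l2' := subst rho l2) in *. set (r2' := subst rho r2) in *.
  assert (Hr1 : NoDup (vars r1)) by (eapply Permutation_NoDup; eauto).
  assert (Hl2' : NoDup (vars l2')).
  { apply subst_fix_NoDup with (s1 := fun y => Var (y - N)); auto.
    intros; simpl; rewrite Nat.add_sub; auto. }
  assert (Hlow : forall z, In z (vars l1 ++ vars r1) -> z < N).
  { intros z Hz; apply maxl_ge in Hz; unfold N; lia. }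
  assert (Hhigh : forall t z, In z (vars (subst rho t)) -> N <= z).
  { intros t z Hz. rewrite vars_subst, in_flat_map in Hz.
    destruct Hz as [x [_ [<-|[]]]]. lia. }
  assert (Hd : NoDup (vars r1 ++ vars l2')).
  { apply nodup_app_iff. split; auto. split; auto. intros z Z1 Z2.
    apply Hhigh in Z2. assert (z < N) by (apply Hlow; apply in_or_app; auto). lia. }
  destruct (unify_props r1 l2' Hd) as (U&V&_).
  set (mu := unify r1 l2') in *.
  exists (subst mu l1), (subst mu r2'). split; [|split].
  - intros t v; unfold op_comp; split.
    + intros [u [Hfu Hgu]]. apply Hf in Hfu as [s [-> ->]].
      apply Hg' in Hgu as [tau [Heq ->]].
      set (nu := fun z => if z <? N then s z else tau z).
      assert (E1 : forall t, (forall z, In z (vars t) -> z < N) -> subst s t = subst nu t).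
      { intros t0 Ht0; apply subst_ext; intros z Hz; unfold nu.
        apply Ht0, Nat.ltb_lt in Hz; rewrite Hz; auto. }
      assert (E2 : forall t, subst tau (subst rho t) = subst nu (subst rho t)).
      { intros t0; apply subst_ext; intros z Hz; unfold nu.
        apply Hhigh in Hz. destruct (Nat.ltb_spec z N); auto; lia. }
      assert (Hu : subst nu r1 = subst nu l2').
      { rewrite <- E1. unfold l2'. rewrite <- E2. exact Heq.
        intros; apply Hlow; apply in_or_app; auto. }
      pose proof (unify_mgu _ _ _ Hu) as Hm.
      exists nu. split.
      * rewrite E1 by (intros; apply Hlow; apply in_or_app; auto).
        rewrite subst_subst; apply subst_ext; intros; symmetry; apply Hm.
      * unfold r2'. rewrite E2. fold r2'.
        rewrite subst_subst; apply subst_ext; intros; symmetry; apply Hm.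
    + intros [th [-> ->]]. exists (subst th (subst mu r1)). split.
      * apply Hf. exists (fun z => subst th (mu z)). rewrite !subst_subst. auto.
      * apply Hg'. exists (fun z => subst th (mu z)). rewrite <- !subst_subst.
        rewrite U. auto.
  - eapply Permutation_NoDup; [apply perm_subst, Permutation_sym, Hp1|]. exact V.
  - eapply Permutation_trans; [apply perm_subst, Hp1|]. rewrite U.
    apply perm_subst. unfold l2', r2'. apply perm_subst. exact Hp2.
Qed.

Fixpoint ctx (a : address) (N : nat) (h : term) : term :=
  match a with
  | [] => h
  | false :: a' => Op (ctx a' (S N) h) (Var N)
  | true :: a' => Op (Var N) (ctx a' (S N) h)
  end.

Lemma ctx_perm a N h : Permutation (vars (ctx a N h)) (vars h ++ seq N (length a)).
Proof.
  revert N; induction a as [|b a IH]; intros N; simpl.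
  - rewrite app_nil_r; auto.
  - destruct b; simpl.
    + eapply Permutation_trans; [apply perm_skip, IH|]. apply Permutation_middle.
    + eapply Permutation_trans; [apply Permutation_app_comm|]. simpl.
      eapply Permutation_trans; [apply perm_skip, IH|]. apply Permutation_middle.
Qed.

Lemma ctx_vars a N h z : In z (vars (ctx a N h)) -> In z (vars h) \/ N <= z.
Proof.
  intro H. eapply Permutation_in in H; [|apply ctx_perm].
  apply in_app_or in H as [H|H]; auto. apply in_seq in H. lia.
Qed.

Lemma Oplus_ctx a : forall N h1 h2 t u,
  (forall z, In z (vars h1 ++ vars h2) -> z < N) ->
  ((exists s, subterm t a = Some (subst s h1) /\ replace t a (subst s h2) = Some u) <->
   exists s, t = subst s (ctx a N h1) /\ u = subst s (ctx a N h2)).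
Proof.
  induction a as [|b a IH]; intros N h1 h2 t u Hb.
  - split; intros [s [H1 H2]]; exists s; destruct t; simpl in *; split; congruence.
  - assert (Hb' : forall z, In z (vars h1 ++ vars h2) -> z < S N)
      by (intros z Hz; apply Hb in Hz; lia).
    assert (Hne : forall h z, (forall z, In z (vars h) -> z < N) ->
               In z (vars (ctx a (S N) h)) -> z <> N).
    { intros h z Hh Hz. apply ctx_vars in Hz as [Hz|Hz]; [apply Hh in Hz|]; lia. }
    assert (B1 : forall z, In z (vars h1) -> z < N) by (intros; apply Hb, in_or_app; auto).
    assert (B2 : forall z, In z (vars h2) -> z < N) by (intros; apply Hb, in_or_app; auto).
    destruct t as [x|t1 t2].
    { split; intros [s [H1 H2]]; [destruct b; discriminate|].
      destruct b; discriminate. }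
    destruct b; simpl.
    + split.
      * intros [s [H1 H2]]. destruct (replace t2 a (subst s h2)) as [t0|] eqn:E; [|discriminate].
        injection H2 as <-.
        destruct (proj1 (IH (S N) h1 h2 t2 t0 Hb') (ex_intro _ s (conj H1 E))) as [s' [E1 E2]].
        exists (fun z => if Nat.eq_dec z N then t1 else s' z). simpl.
        destruct Nat.eq_dec; [|congruence].
        split; f_equal; [rewrite E1|rewrite E2]; apply subst_ext; intros z Hz;
          destruct Nat.eq_dec as [e'|]; auto; exfalso;
          first [exact (Hne _ z B1 Hz e') | exact (Hne _ z B2 Hz e')].
      * intros [s [Ht Hu]]. injection Ht as -> ->. subst u.
        destruct (proj2 (IH (S N) h1 h2 _ _ Hb') (ex_intro _ s (conj eq_refl eq_refl)))
          as [s' [E1 E2]].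
        exists s'. rewrite E1, E2. auto.
    + split.
      * intros [s [H1 H2]]. destruct (replace t1 a (subst s h2)) as [t0|] eqn:E; [|discriminate].
        injection H2 as <-.
        destruct (proj1 (IH (S N) h1 h2 t1 t0 Hb') (ex_intro _ s (conj H1 E))) as [s' [E1 E2]].
        exists (fun z => if Nat.eq_dec z N then t2 else s' z). simpl.
        destruct Nat.eq_dec; [|congruence].
        split; f_equal; [rewrite E1|rewrite E2]; apply subst_ext; intros z Hz;
          destruct Nat.eq_dec as [e'|]; auto; exfalso;
          first [exact (Hne _ z B1 Hz e') | exact (Hne _ z B2 Hz e')].
      * intros [s [Ht Hu]]. injection Ht as -> ->. subst u.
        destruct (proj2 (IH (S N) h1 h2 _ _ Hb') (ex_intro _ s (conj eq_refl eq_refl)))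
          as [s' [E1 E2]].
        exists s'. rewrite E1, E2. auto.
Qed.

Lemma seed_Oplus L a : NoDup (vars (fst L)) -> Permutation (vars (fst L)) (vars (snd L)) ->
  exists l r, seed (Oplus L a) l r /\ NoDup (vars l) /\ Permutation (vars l) (vars r).
Proof.
  intros Hn Hp.
  set (N := S (maxl (vars (fst L) ++ vars (snd L)))).
  assert (Hb : forall z, In z (vars (fst L) ++ vars (snd L)) -> z < N).
  { intros z Hz; apply maxl_ge in Hz; unfold N; lia. }
  exists (ctx a N (fst L)), (ctx a N (snd L)). split; [|split].
  - intros t u. unfold Oplus. apply Oplus_ctx; auto.
  - eapply Permutation_NoDup; [apply Permutation_sym, ctx_perm|].
    apply nodup_app_iff. split; auto. split; [apply seq_NoDup|].
    intros z Z1 Z2. apply in_seq in Z2. assert (z < N) by (apply Hb, in_or_app; auto). lia.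
  - eapply Permutation_trans; [apply ctx_perm|].
    eapply Permutation_trans; [|apply Permutation_sym, ctx_perm].
    apply Permutation_app_tail; auto.
Qed.

Lemma seed_inj f l r l' r' : seed f l r -> seed f l' r' -> NoDup (vars l') ->
  Permutation (vars l') (vars r') -> NoDup (vars l) /\ NoDup (vars r).
Proof.
  intros H H' Hn Hp.
  assert (Hr' : NoDup (vars r')) by (eapply Permutation_NoDup; eauto).
  assert (F : f l r) by (apply H; exists Var; rewrite !subst_var; auto).
  assert (F' : f l' r') by (apply H'; exists Var; rewrite !subst_var; auto).
  apply H' in F as [s2 [E1 E2]]. apply H in F' as [s1 [E3 E4]].
  assert (I1 : subst (fun x => subst s1 (s2 x)) l' = l')
    by (rewrite <- subst_subst, <- E1; auto).
  assert (I2 : subst (fun x => subst s1 (s2 x)) r' = r')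
    by (rewrite <- subst_subst, <- E2; auto).
  split.
  - rewrite E1. apply subst_fix_NoDup with s1; auto. apply subst_id_inv; auto.
  - rewrite E2. apply subst_fix_NoDup with s1; auto. apply subst_id_inv; auto.
Qed.

Lemma in_G_good Lfam (Hlin : forall L, Lfam L -> linear_law L) f :
  in_G Lfam f -> good f.
Proof.
  induction 1 as [|f L a Hf IH HL|f L a Hf IH HL].
  - exists (Var 0), (Var 0). split; [|split; auto; repeat constructor; simpl; tauto].
    intros t u; unfold op_id; split.
    + intros ->. exists (fun _ => u). auto.
    + intros [s [-> ->]]. auto.
  - destruct IH as (l1&r1&S1&N1&P1).
    destruct (Hlin L HL) as (Hb&Hi1&Hi2).
    assert (Hp : Permutation (vars (fst L)) (vars (snd L))) by (apply NoDup_Permutation; auto).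
    destruct (seed_Oplus L a Hi1 Hp) as (l2&r2&S2&N2&P2).
    eapply seed_comp; eauto.
  - destruct IH as (l1&r1&S1&N1&P1).
    destruct (Hlin L HL) as (Hb&Hi1&Hi2).
    assert (Hp : Permutation (vars (fst L)) (vars (snd L))) by (apply NoDup_Permutation; auto).
    destruct (seed_Oplus L a Hi1 Hp) as (l2&r2&S2&N2&P2).
    eapply seed_comp with (l2 := r2) (r2 := l2); eauto.
    + intros t u. unfold Ominus. rewrite (S2 u t). split; intros [s [-> ->]]; eauto.
    + eapply Permutation_NoDup; eauto.
    + apply Permutation_sym; auto.
Qed.

Theorem lemma2p5 (Lfam : law -> Prop)
  (Hlin : forall L, Lfam L -> linear_law L) :
  forall f : operator, in_G Lfam f ->
    ~ empty_operator f /\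
    (exists l r, seed f l r) /\
    (forall l r, seed f l r -> injective_term l /\ injective_term r).
Proof.
  intros f Hf. destruct (in_G_good Lfam Hlin f Hf) as (l&r&Hs&Hn&Hp).
  split; [|split].
  - intro He. apply (He l r). apply Hs. exists Var. rewrite !subst_var. auto.
  - exists l, r; exact Hs.
  - intros l0 r0 H0. unfold injective_term. exact (seed_inj f l0 r0 l r H0 Hs Hn Hp).
Qed.
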